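(* Let $|\psi\rangle$ be a pure three-qubit state and let $\{i,j,k\}=\{A,B,C\}$. Then $S_{ij}>1$ (i.e. $\rho_{ij}$ violates the three-settings CJWR linear steering inequality) if and only if $\mathcal C_{ij}^2>\frac{\mathcal C_{ik}^2+\mathcal C_{jk}^2}{2}$.
   Context: For a two-qubit state $\rho$ let $t_{kl}=\mathrm{Tr}[\rho\,\sigma_k\otimes\sigma_l]$ ($\sigma_k$ Pauli matrices) and $S(\rho)=\sum_{k,l=1}^3 t_{kl}^2$; $\rho_{ij}$ is the reduced state of qubits $i,j$ of $|\psi\rangle$ and $S_{ij}=S(\rho_{ij})$. $\mathcal C_{ij}$ is the Wootters concurrence of $\rho_{ij}$: $\mathcal C(\rho)=\max\{0,\lambda_1-\lambda_2-\lambda_3-\lambda_4\}$, with $\lambda_1\ge\dots\ge\lambda_4$ the square roots of the eigenvalues of $\rho(\sigma_2\otimes\sigma_2)\rho^*(\sigma_2\otimes\sigma_2)$. The three-settings CJWR inequality $\frac1{\sqrt3}|\sum_{k=1}^3\langle A_k\otimes B_k\rangle|\le1$ (unit $\hat a_k$, orthonormal $\hat b_k$) has maximum $\sqrt{S(\rho)}$ over settings, so it is violated iff $S(\rho)>1$. *)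

(* Defs.v *)
(* Complex numbers are modelled as R[i] for a real closed
   field R (e.g. the reals); all definitions are stated for an arbitrary
   numClosedFieldType C. *)
From HB Require Import structures.
From mathcomp Require Import all_boot all_order all_algebra.
Set Implicit Arguments. Unset Strict Implicit. Unset Printing Implicit Defensive.
Import Order.TTheory GRing.Theory Num.Theory.
Local Open Scope ring_scope.

Section Defs.
Variable C : numClosedFieldType.

Definition pauli (k : 'I_3) : 'M[C]_2 :=
  \matrix_(r < 2, s < 2)
    match val k with
    | 0%N => if r != s then 1 else 0
    | 1%N => if r == s then 0 else if (val r == 0%N) then - 'i else 'i
    | _ => if r == s then (if val r == 0%N then 1 else -1) else 0
    end.

(* Kronecker product of 2x2 matrices; basis index of |a b> is 2a+b. *)
Definition kron2 (A B : 'M[C]_2) : 'M[C]_4 :=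
  \matrix_(r < 4, s < 4)
    (A (inord (r %/ 2)%N) (inord (s %/ 2)%N) * B (inord (r %% 2)%N) (inord (s %% 2)%N)).

(* A three-qubit pure state: a unit vector of C^8.  The computational basis
   state |b0 b1 b2> (qubit A = 0, B = 1, C = 2) has index 4 b0 + 2 b1 + b2. *)
Definition normalized (psi : 'cV[C]_8) := \sum_(i < 8) `|psi i 0| ^+ 2 = 1.

Definition basis_idx (f : {ffun 'I_3 -> 'I_2}) : 'I_8 :=
  inord (\sum_(q < 3) f q * 2 ^ (2 - q))%N.

Definition amp (psi : 'cV[C]_8) (f : {ffun 'I_3 -> 'I_2}) : C :=
  psi (basis_idx f) 0.

(* Reduced density matrix rho_ij = Tr_k |psi><psi| of qubits i, j (i first),
   obtained by tracing out the remaining qubit. *)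
Definition reduced (psi : 'cV[C]_8) (i j : 'I_3) : 'M[C]_4 :=
  \matrix_(r < 4, s < 4)
    \sum_(f : {ffun 'I_3 -> 'I_2} |
            (val (f i) == (r %/ 2)%N) && (val (f j) == (r %% 2)%N))
    \sum_(g : {ffun 'I_3 -> 'I_2} |
            [&& val (g i) == (s %/ 2)%N, val (g j) == (s %% 2)%N &
             [forall q, (q != i) && (q != j) ==> (f q == g q)]])
      amp psi f * (amp psi g)^*.

Definition tcorr (rho : 'M[C]_4) (k l : 'I_3) : C :=
  \tr (rho *m kron2 (pauli k) (pauli l)).

Definition Sval (rho : 'M[C]_4) : C := \sum_(k < 3) \sum_(l < 3) tcorr rho k l ^+ 2.

Definition spinflip (rho : 'M[C]_4) : 'M[C]_4 :=
  let Y := kron2 (pauli 1) (pauli 1) in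
  rho *m Y *m map_mx (@Num.conj_op C) rho *m Y.

Definition eigenvalues (M : 'M[C]_4) : seq C :=
  sval (closed_field_poly_normal (char_poly M)).

Definition lambdas (rho : 'M[C]_4) : seq C :=
  sort (fun x y => y <= x) (map sqrtC (eigenvalues (spinflip rho))).

Definition concurrence (rho : 'M[C]_4) : C :=
  let l := lambdas rho in Num.max 0 (l`_0 - l`_1 - l`_2 - l`_3).

End Defs.

(* Main.v *)
Require Import Defs.
From HB Require Import structures.
From mathcomp Require Import all_boot all_order all_algebra.
From mathcomp Require Import complex zify ring.
Import Order.TTheory GRing.Theory Num.Theory.
Local Open Scope ring_scope.
Lemma sum4 (R : nmodType) (F : 'I_4 -> R) : \sum_(i < 4) F i =
  F (@Ordinal 4 0 isT) + F (@Ordinal 4 1 isT) + F (@Ordinal 4 2 isT) + F (@Ordinal 4 3 isT).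
Proof. rewrite !big_ord_recl big_ord0 addr0 ?addrA; congr (F _ + F _ + F _ + F _); by apply: val_inj. Qed.
Lemma sum3 (R : nmodType) (F : 'I_3 -> R) : \sum_(i < 3) F i =
  F (@Ordinal 3 0 isT) + F (@Ordinal 3 1 isT) + F (@Ordinal 3 2 isT).
Proof. rewrite !big_ord_recl big_ord0 addr0 ?addrA; congr (F _ + F _ + F _); by apply: val_inj. Qed.
Lemma sum2' (R : nmodType) (F : 'I_2 -> R) : \sum_(i < 2) F i =
  F (@Ordinal 2 0 isT) + F (@Ordinal 2 1 isT).
Proof. rewrite !big_ord_recl big_ord0 addr0 ?addrA; congr (F _ + F _); by apply: val_inj. Qed.




Lemma sylvester (R : comNzRingType) m n (A : 'M[R]_(m,n)) (B : 'M[R]_(n,m)) :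
  'X^n * char_poly (A *m B) = 'X^m * char_poly (B *m A).
Proof.
pose x : {poly R} := 'X.
pose A' := map_mx (@polyC R) A; pose B' := map_mx (@polyC R) B.
have eAB : char_poly_mx (A *m B) = x%:M - A' *m B' by rewrite /char_poly_mx map_mxM.
have eBA : char_poly_mx (B *m A) = x%:M - B' *m A' by rewrite /char_poly_mx map_mxM.
pose Q := block_mx (x%:M : 'M_m) A' B' (1%:M : 'M_n).
have e1 : block_mx 1%:M A' 0 1%:M *m block_mx (x%:M - A' *m B') 0 B' 1%:M = Q.
  rewrite mulmx_block !mul1mx !mulmx0 !mul0mx !mulmx1 !add0r ?addr0.
  by rewrite subrK.
have e2 : Q *m block_mx 1%:M (- A') 0 (x%:M) = block_mx (x%:M) 0 B' (x%:M - B' *m A').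
  rewrite mulmx_block !mulmx1 !mulmx0 !addr0 mul_scalar_mx mul_mx_scalar.
  by rewrite mul_scalar_mx scalerN addNr mulmxN scale1r addrC.
have := congr1 determinant e2; rewrite det_mulmx det_ublock det_lblock -e1.
rewrite det_mulmx det_ublock det_lblock !det1 !det_scalar !mul1r mulr1.
rewrite /char_poly eAB eBA /x => H. by rewrite mulrC H.
Qed.


Notation o0 := (inord 0 : 'I_2).
Notation o1 := (inord 1 : 'I_2).

Lemma o01 : (o0 == o1) = false.
Proof. by rewrite -val_eqE /= !inordK. Qed.
Lemma o10 : (o1 == o0) = false.
Proof. by rewrite -val_eqE /= !inordK. Qed.

Lemma sum2 (R : nmodType) (F : 'I_2 -> R) : \sum_(i < 2) F i = F o0 + F o1.
Proof.
rewrite !big_ord_recl big_ord0 addr0; congr (F _ + F _); apply: val_inj; by rewrite /= inordK.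
Qed.

Lemma det2 (R : comNzRingType) (M : 'M[R]_2) :
  \det M = M o0 o0 * M o1 o1 - M o0 o1 * M o1 o0.
Proof.
rewrite (expand_det_row _ o0) sum2 /cofactor !det_mx11 !mxE /=.
have -> : lift o0 (0 : 'I_1) = o1 by apply/val_inj; rewrite /= /bump !inordK.
have -> : lift o1 (0 : 'I_1) = o0 by apply/val_inj; rewrite /= /bump !inordK.
rewrite !inordK //= expr0 expr1; ring.
Qed.

Lemma charpoly2 (R : comNzRingType) (P : 'M[R]_2) :
  char_poly P = 'X^2 - (\tr P)%:P * 'X + (\det P)%:P.
Proof.
rewrite /char_poly /char_poly_mx [LHS]det2 !mxE o01 o10 !eqxx /mxtrace sum2 det2 /=.
rewrite !mulr1n !mulr0n ?polyCD ?polyCB ?polyCN ?polyCM; ring.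
Qed.


Lemma div2_lt (r : 'I_4) : (r %/ 2 < 2)%N.
Proof. case: r => [[|[|[|[|?]]]] ?] //. Qed.
Lemma mod2_lt (r : 'I_4) : (r %% 2 < 2)%N.
Proof. by rewrite ltn_mod. Qed.

Section Pauli.
Variable C : numClosedFieldType.

Definition sr (k a b : nat) : C :=
  match k with
  | 0%N => if a != b then 1 else 0
  | 1%N => if a == b then 0 else if a == 0%N then -1 else 1
  | _ => if a == b then (if a == 0%N then 1 else -1) else 0
  end.
Definition ci (k : nat) : C := if k == 1%N then 'i else 1.

Lemma pauliE (k : 'I_3) a b : (a < 2)%N -> (b < 2)%N ->
  pauli C k (inord a) (inord b) = ci k * sr k a b.
Proof.
move=> ha hb; rewrite mxE /= !inordK //.
have -> : (inord a == inord b :> 'I_2) = (a == b) by rewrite -val_eqE /= !inordK.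
case: k => [[|[|[|?]]] ?] //=; rewrite /ci /sr /= ?mul1r //.
by case: (a == b); case: (a == 0%N); rewrite ?mulr0 ?mulrN1 ?mulr1.
Qed.

Lemma kronE (k l : 'I_3) (r s : 'I_4) :
  kron2 (pauli C k) (pauli C l) r s =
  ci k * ci l * (sr k (r %/ 2) (s %/ 2) * sr l (r %% 2) (s %% 2)).
Proof.
rewrite mxE !pauliE ?div2_lt ?mod2_lt //; ring.
Qed.

Lemma sr_conj k a b : (sr k a b)^* = sr k a b.
Proof.
rewrite /sr; case: k => [|[|k]];
  repeat (case: (_ == _) => //=); by rewrite ?rmorphN ?rmorph1 ?rmorph0.
Qed.

Lemma sr1_anti {a b} : (a < 2)%N -> (b < 2)%N -> sr 1 b a = - sr 1 a b.
Proof. by case: a => [|[|?]] //; case: b => [|[|?]] //= _ _; rewrite ?oppr0 ?opprK. Qed.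

Lemma conjE (x : C) : Num.conj_op x = x^*.
Proof. by []. Qed.

Definition Ymx : 'M[C]_4 := kron2 (pauli C 1) (pauli C 1).

Lemma YmxE (r s : 'I_4) : Ymx r s = - (sr 1 (r %/ 2) (s %/ 2) * sr 1 (r %% 2) (s %% 2)).
Proof.
rewrite /Ymx kronE /ci /=. rewrite -expr2 sqrCi; ring.
Qed.

Lemma Ymx_tr : Ymx^T = Ymx.
Proof.
apply/matrixP => r s; rewrite mxE !YmxE.
rewrite (sr1_anti (div2_lt r) (div2_lt s)) (sr1_anti (mod2_lt r) (mod2_lt s)); ring.
Qed.

Lemma Ymx_conj : map_mx (@Num.conj_op C) Ymx = Ymx.
Proof.
apply/matrixP => r s; rewrite mxE !YmxE.
rewrite rmorphN rmorphM; congr (- (_ * _)); exact: sr_conj.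
Qed.

End Pauli.


Lemma sum3n (F : 'I_3 -> nat) : (\sum_(q < 3) F q = F (inord 0) + F (inord 1) + F (inord 2))%N.
Proof.
rewrite !big_ord_recr big_ord0 /= add0n; congr (_ + _ + _); congr F; apply: val_inj; by rewrite /= inordK.
Qed.

Lemma basis_idx_val f : val (basis_idx f) = (4 * f (inord 0) + 2 * f (inord 1) + f (inord 2))%N.
Proof.
rewrite /basis_idx sum3n.
have -> : (2 ^ (2 - (inord 0 : 'I_3)) = 4)%N by rewrite inordK.
have -> : (2 ^ (2 - (inord 1 : 'I_3)) = 2)%N by rewrite inordK.
have -> : (2 ^ (2 - (inord 2 : 'I_3)) = 1)%N by rewrite inordK.
move: (ltn_ord (f (inord 0))) (ltn_ord (f (inord 1))) (ltn_ord (f (inord 2))) => h0 h1 h2.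
rewrite /= inordK; lia.
Qed.

Lemma ord3 (n : 'I_3) : n = inord 0 \/ n = inord 1 \/ n = inord 2.
Proof.
case: n => [[|[|[|?]]] ?] //=; [left|right;left|right;right]; apply: val_inj; by rewrite /= inordK.
Qed.

Lemma basis_inj : injective basis_idx.
Proof.
move=> f g /(congr1 val); rewrite !basis_idx_val => H.
move: (ltn_ord (f (inord 0))) (ltn_ord (f (inord 1))) (ltn_ord (f (inord 2))).
move: (ltn_ord (g (inord 0))) (ltn_ord (g (inord 1))) (ltn_ord (g (inord 2))) => *.
apply/ffunP => n; apply: val_inj.
have [->|[->|->]] := ord3 n; rewrite /=; lia.
Qed.

Lemma basis_bij : bijective basis_idx.
Proof. apply: (inj_card_bij basis_inj). by rewrite card_ffun !card_ord. Qed.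


Lemma three {p q t n : 'I_3} : p != q -> p != t -> q != t -> n != p -> n != q -> n = t.
Proof.
move: p q t n; do 4 (case=> [[|[|[|?]]] ?] //=); move=> *; by apply: val_inj.
Qed.

Section Red.
Variable C : numClosedFieldType.

Definition mk (p q t : 'I_3) (x y w : 'I_2) : {ffun 'I_3 -> 'I_2} :=
  [ffun n => if n == p then x else if n == q then y else w].

Definition Phi (psi : 'cV[C]_8) p q t : 'M[C]_(4,2) :=
  \matrix_(r < 4, w < 2) amp psi (mk p q t (inord (r %/ 2)) (inord (r %% 2)) w).

Definition hc {m n} (A : 'M[C]_(m,n)) := (map_mx (@Num.conj_op C) A)^T.


Lemma mk_eq p q t x y w (f : {ffun 'I_3 -> 'I_2}) : p != q -> p != t -> q != t ->
  (f == mk p q t x y w) = [&& f p == x, f q == y & f t == w].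
Proof.
move=> pq pt qt; apply/eqP/and3P => [->|[/eqP fp /eqP fq /eqP ft]].
  have qp : (q == p) = false by rewrite eq_sym (negbTE pq).
  have tp : (t == p) = false by rewrite eq_sym (negbTE pt).
  have tq : (t == q) = false by rewrite eq_sym (negbTE qt).
  by rewrite !ffunE qp tp tq !eqxx.
apply/ffunP => n; rewrite ffunE.
case: (eqVneq n p) => [->//|np]; case: (eqVneq n q) => [->//|nq].
by rewrite (three pq pt qt np nq).
Qed.

Lemma reducedE psi p q t : p != q -> p != t -> q != t ->
  reduced psi p q = Phi psi p q t *m hc (Phi psi p q t).
Proof.
move=> pq pt qt; apply/matrixP => r s; rewrite !mxE.
pose s1 : 'I_2 := inord (s %/ 2); pose s2 : 'I_2 := inord (s %% 2).
pose r1 : 'I_2 := inord (r %/ 2); pose r2 : 'I_2 := inord (r %% 2).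
have vs1 : val s1 = (s %/ 2)%N by rewrite /= inordK ?div2_lt.
have vs2 : val s2 = (s %% 2)%N by rewrite /= inordK ?mod2_lt.
have vr1 : val r1 = (r %/ 2)%N by rewrite /= inordK ?div2_lt.
have vr2 : val r2 = (r %% 2)%N by rewrite /= inordK ?mod2_lt.
transitivity (\sum_(f : {ffun 'I_3 -> 'I_2} | (val (f p) == r %/ 2)%N && (val (f q) == r %% 2)%N)
   amp psi f * (amp psi (mk p q t s1 s2 (f t)))^*).
  apply: eq_bigr => f _; rewrite (big_pred1 (mk p q t s1 s2 (f t))) // => g /=.
  rewrite mk_eq // -vs1 -vs2 !val_eqE.
  apply/and3P/and3P => [[-> -> /forallP /(_ t)]|[/eqP -> /eqP -> /eqP gt]].
    have tp : (t == p) = false by rewrite eq_sym (negbTE pt).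
    have tq : (t == q) = false by rewrite eq_sym (negbTE qt).
    by rewrite tp tq /= eq_sym.
  split=> //; apply/forallP => n; apply/implyP => /andP[np nq].
  by rewrite (three pq pt qt np nq) gt.
rewrite (partition_big (fun f : {ffun 'I_3 -> 'I_2} => f t) predT) //=.
apply: eq_bigr => w _; rewrite (big_pred1 (mk p q t r1 r2 w)).
  have tp : (t == p) = false by rewrite eq_sym (negbTE pt).
  have tq : (t == q) = false by rewrite eq_sym (negbTE qt).
  by rewrite !mxE !ffunE tp tq.
move=> f /=; rewrite mk_eq // -vr1 -vr2 !val_eqE andbA. reflexivity.
Qed.

End Red.
Arguments hc {C m n}.
Arguments Phi {C}.


Section Conc.
Variable C : numClosedFieldType.
Notation cj := (map_mx (@Num.conj_op C)).

Lemma cjK m n (A : 'M[C]_(m,n)) : cj (cj A) = A.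
Proof. by apply/matrixP => i j; rewrite !mxE conjCK. Qed.

Lemma spinflipE (P : 'M[C]_(4,2)) :
  spinflip (P *m hc P) = P *m (hc P *m Ymx C *m cj P *m P^T *m Ymx C).
Proof.
rewrite /spinflip /hc -/(Ymx C) map_mxM map_trmx cjK.
by rewrite !mulmxA.
Qed.

Lemma NPE (P : 'M[C]_(4,2)) :
  (hc P *m Ymx C *m cj P *m P^T *m Ymx C) *m P = cj (P^T *m Ymx C *m P) *m (P^T *m Ymx C *m P).
Proof.
by rewrite !map_mxM Ymx_conj /hc map_trmx !mulmxA.
Qed.

Lemma charpoly_spin (P : 'M[C]_(4,2)) :
  char_poly (spinflip (P *m hc P)) = 'X^2 * char_poly (cj (P^T *m Ymx C *m P) *m (P^T *m Ymx C *m P)).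
Proof.
rewrite spinflipE -NPE.
have := @sylvester _ _ _ P (hc P *m Ymx C *m cj P *m P^T *m Ymx C).
have nz : ('X^2 : {poly C}) != 0 by rewrite expf_neq0 // polyX_eq0.
move=> H; apply: (mulfI nz); by rewrite mulrA -exprD H.
Qed.


Lemma conc_core (rho : 'M[C]_4) (F D : C) : 0 <= D -> 2 * D <= F ->
  char_poly (spinflip rho) = 'X^2 * ('X^2 - F%:P * 'X + (D ^+ 2)%:P) ->
  concurrence rho ^+ 2 = F - 2 * D.
Proof.
move=> D0 DF hcp.
have Fm : 0 <= F - 2 * D by rewrite subr_ge0.
have Fp : 0 <= F + 2 * D by rewrite -(subrK (2 * D) F) -addrA addr_ge0 // addr_ge0 // mulr_ge0.
set u := sqrtC (F + 2 * D); set v := sqrtC (F - 2 * D).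
have u0 : 0 <= u by rewrite sqrtC_ge0.
have v0 : 0 <= v by rewrite sqrtC_ge0.
have vu : v <= u.
  have D2 : 0 <= 2 * D by rewrite mulr_ge0.
  rewrite ler_sqrtC ?nnegrE // lerD2l; apply: (@le_trans _ _ 0); by rewrite ?oppr_le0.
have u2 : u ^+ 2 = F + 2 * D by rewrite sqrtCK.
have v2 : v ^+ 2 = F - 2 * D by rewrite sqrtCK.
pose l1 := (u + v) / 2; pose l2 := (u - v) / 2.
have l20 : 0 <= l2 by rewrite divr_ge0 // subr_ge0.
have l10 : 0 <= l1 by rewrite divr_ge0 // addr_ge0.
have l21 : l2 <= l1.
  rewrite ler_pM2r ?invr_gt0 // lerD2l; apply: (@le_trans _ _ 0); by rewrite ?oppr_le0.
have l12 : l1 - l2 = v by rewrite /l1 /l2; field.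
have ls : l1 ^+ 2 + l2 ^+ 2 = F.
  have -> : l1 ^+ 2 + l2 ^+ 2 = (u ^+ 2 + v ^+ 2) / 2 by rewrite /l1 /l2; field.
  by rewrite u2 v2; field.
have lp : l1 * l2 = D.
  have -> : l1 * l2 = (u ^+ 2 - v ^+ 2) / 4 by rewrite /l1 /l2; field.
  by rewrite u2 v2; field.
have hprod : char_poly (spinflip rho) =
    \prod_(z <- [:: 0; 0; l1 ^+ 2; l2 ^+ 2]) ('X - z%:P).
  rewrite hcp !big_cons big_nil mulr1 subr0 -ls -lp.
  rewrite ?polyCD ?polyCM ?exprMn ?polyCM ?polyCX; ring.
have hs : perm_eq (eigenvalues (spinflip rho)) [:: 0; 0; l1 ^+ 2; l2 ^+ 2].
  rewrite /eigenvalues; case: (closed_field_poly_normal _) => s /= hs'.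
  apply: prod_XsubC_eq; rewrite -hprod [RHS]hs'.
  by rewrite (monicP (char_poly_monic _)) scale1r.
have hm : perm_eq (map sqrtC (eigenvalues (spinflip rho))) [:: l1; l2; 0; 0].
  apply: perm_trans (perm_map sqrtC hs) _; rewrite /= sqrtC0 !sqrCK //.
  by rewrite (perm_catC [:: 0; 0] [:: l1; l2]).
have hl : lambdas rho = [:: l1; l2; 0; 0].
  rewrite /lambdas.
  have nn : forall x, x \in [:: l1; l2; 0; 0] -> 0 <= x.
    by move=> x; rewrite !inE => /or4P [] /eqP ->.
  have tr : transitive (fun x y : C => y <= x).
    by move=> y x z h1 h2; exact: (le_trans h2 h1).
  have e : sort (fun x y : C => y <= x) [:: l1; l2; 0; 0] =
           sort (fun x y : C => y <= x) (map sqrtC (eigenvalues (spinflip rho))).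
    apply/perm_sort_inP; last by rewrite perm_sym.
    - move=> x y /nn hx /nn hy; exact: real_leVge (ger0_real hy) (ger0_real hx).
    - by move=> y x z _ _ _; apply: tr.
    - by move=> x y _ _ /andP[h1 h2]; apply: le_anti; rewrite h1 h2.
  by rewrite -e sorted_sort //= l21 l20 lexx.
rewrite /concurrence hl /= !subr0 max_r l12 ?v2 //.
Qed.


Definition Mof (P : 'M[C]_(4,2)) := P^T *m Ymx C *m P.
Definition Fm (M : 'M[C]_2) := \sum_(a < 2) \sum_(b < 2) `|M a b| ^+ 2.

Lemma Mof_sym P a b : Mof P b a = Mof P a b.
Proof.
have Ms : (Mof P)^T = Mof P by rewrite /Mof !trmx_mul trmxK Ymx_tr mulmxA.
by rewrite -[in LHS]Ms mxE.
Qed.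

Lemma amgm {x y : C} : x \is Num.real -> y \is Num.real -> 2 * (x * y) <= x ^+ 2 + y ^+ 2.
Proof.
move=> rx ry; rewrite -subr_ge0.
have -> : x ^+ 2 + y ^+ 2 - 2 * (x * y) = (x - y) ^+ 2 by ring.
by apply: real_exprn_even_ge0 => //; exact: rpredB.
Qed.

Lemma Fm_ge M : 2 * `|\det M| <= Fm M.
Proof.
rewrite det2 /Fm !sum2.
apply: (@le_trans _ _ (2 * (`|M o0 o0| * `|M o1 o1|) + 2 * (`|M o0 o1| * `|M o1 o0|))).
  rewrite -mulrDr ler_pM2l // -!normrM; exact: ler_normB.
have h1 := amgm (normr_real (M o0 o0)) (normr_real (M o1 o1)).
have h2 := amgm (normr_real (M o0 o1)) (normr_real (M o1 o0)).
apply: le_trans (lerD h1 h2) _.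
by rewrite le_eqVlt; apply/orP; left; apply/eqP; ring.
Qed.

Lemma concE (P : 'M[C]_(4,2)) :
  concurrence (P *m hc P) ^+ 2 = Fm (Mof P) - 2 * `|\det (Mof P)|.
Proof.
apply: conc_core; [exact: normr_ge0 | exact: Fm_ge |].
rewrite charpoly_spin -/(Mof P) charpoly2; congr (_ * (_ - _ * _ + _)).
  congr (_ %:P); rewrite /mxtrace /Fm; apply: eq_bigr => a _; rewrite mxE.
  apply: eq_bigr => b _; rewrite Mof_sym normCKC; congr (_ * _); by rewrite mxE.
by rewrite det_mulmx det_map_mx normCKC.
Qed.

End Conc.
Arguments Mof {C}.
Arguments Fm {C}.


Section S.
Variable C : numClosedFieldType.

Lemma ci2 (k l : nat) : (ci C k * ci C l) ^+ 2 = if (k == 1%N) (+) (l == 1%N) then -1 else 1.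
Proof.
rewrite /ci; case: (k == 1%N); case: (l == 1%N); rewrite /= ?mul1r ?mulr1 ?expr1n ?sqrCi //.
by rewrite exprMn sqrCi mulrNN mulr1.
Qed.

Lemma SvalE (rho : 'M[C]_4) : Sval rho =
  \sum_(k < 3) \sum_(l < 3) (if (k == 1%N :> nat) (+) (l == 1%N :> nat) then -1 else 1) *
    (\sum_(r < 4) \sum_(s < 4) rho r s * (sr C k (s %/ 2) (r %/ 2) * sr C l (s %% 2) (r %% 2))) ^+ 2.
Proof.
rewrite /Sval; apply: eq_bigr => k _; apply: eq_bigr => l _.
rewrite -ci2 -exprMn /tcorr /mxtrace mulr_sumr; congr (_ ^+ 2); apply: eq_bigr => r _.
rewrite mxE mulr_sumr; apply: eq_bigr => s _; rewrite kronE; ring.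
Qed.

End S.


Section E.
Variable C : numClosedFieldType.

Definition PhiOf (G : nat -> nat -> nat -> C) : 'M[C]_(4,2) :=
  \matrix_(r < 4, w < 2) G r./2 (odd r) (w : nat).

Lemma o0v : ((inord 0 : 'I_2) : nat) = 0%N. Proof. by rewrite inordK. Qed.
Lemma o1v : ((inord 1 : 'I_2) : nat) = 1%N. Proof. by rewrite inordK. Qed.

Lemma MofE G (a b : 'I_2) : Mof (PhiOf G) a b =
  \sum_(r < 4) \sum_(s < 4) G r./2 (odd r) a * (- (sr C 1 r./2 s./2 * sr C 1 (odd r) (odd s))) * G s./2 (odd s) b.
Proof.
rewrite /Mof mxE exchange_big; apply: eq_bigr => s _; rewrite mxE mulr_suml.
by apply: eq_bigr => r _; rewrite YmxE !mxE !divn2 !modn2.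
Qed.

Lemma det_perm1 G : \det (Mof (PhiOf (fun x y z => G x z y))) = \det (Mof (PhiOf G)).
Proof. rewrite !det2 !MofE !o0v !o1v !sum4 /=; ring. Qed.

Lemma det_perm2 G : \det (Mof (PhiOf (fun x y z => G z x y))) = \det (Mof (PhiOf G)).
Proof. rewrite !det2 !MofE !o0v !o1v !sum4 /=; ring. Qed.

End E.
Arguments PhiOf {C}.


Section F.
Variable C : numClosedFieldType.
Notation cj := (map_mx (@Num.conj_op C)).

Lemma hcE m n (A : 'M[C]_(m,n)) i j : hc A i j = (A j i)^*.
Proof. by rewrite !mxE. Qed.
Lemma cjE m n (A : 'M[C]_(m,n)) i j : cj A i j = (A i j)^*.
Proof. by rewrite !mxE. Qed.

Lemma cj_PhiOf (G : nat -> nat -> nat -> C) : cj (PhiOf G) = PhiOf (fun x y z => (G x y z)^*).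
Proof. by apply/matrixP => i j; rewrite cjE !mxE. Qed.

Lemma cj_Mof (G : nat -> nat -> nat -> C) a b : (Mof (PhiOf G) a b)^* = Mof (PhiOf (fun x y z => (G x y z)^*)) a b.
Proof.
rewrite -cjE /Mof !map_mxM Ymx_conj -map_trmx cj_PhiOf.
by [].
Qed.

Lemma FmE (G : nat -> nat -> nat -> C) : Fm (Mof (PhiOf G)) =
  \sum_(a < 2) \sum_(b < 2) Mof (PhiOf G) a b * Mof (PhiOf (fun x y z => (G x y z)^*)) a b.
Proof.
by apply: eq_bigr => a _; apply: eq_bigr => b _; rewrite normCK cj_Mof.
Qed.

Definition NG (G : nat -> nat -> nat -> C) :=
  \sum_(x < 2) \sum_(y < 2) \sum_(z < 2) G x y z * (G x y z)^*.

Lemma SvalG G : Sval (PhiOf G *m hc (PhiOf G)) =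
  NG G ^+ 2 + 2 * Fm (Mof (PhiOf G)) - Fm (Mof (PhiOf (fun x y z => G x z y)))
   - Fm (Mof (PhiOf (fun x y z => G z x y))).
Proof.
have hr : forall r s : 'I_4, (PhiOf G *m hc (PhiOf G)) r s = G r./2 (odd r) 0%N * (G s./2 (odd s) 0%N)^* + G r./2 (odd r) 1%N * (G s./2 (odd s) 1%N)^*.
  move=> r s; rewrite mxE sum2' !hcE !mxE //.
rewrite SvalE !sum3 !sum4 /= !hr /=.
rewrite !FmE !sum2' !MofE !sum4 /NG !sum2' /=.
ring.
Qed.
End F.
Arguments NG {C}.


Section G.
Variable C : numClosedFieldType.

Definition Bf (psi : 'cV[C]_8) i j k (x y z : nat) : C :=
  amp psi (mk i j k (inord x) (inord y) (inord z)).

Lemma mk_swap p q t x y w : p != q -> p != t -> q != t -> mk p q t x y w = mk p t q x w y.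
Proof.
move=> pq pt qt; apply/ffunP => n; rewrite !ffunE.
have qp : (q == p) = false by rewrite eq_sym (negbTE pq).
have tp : (t == p) = false by rewrite eq_sym (negbTE pt).
have tq : (t == q) = false by rewrite eq_sym (negbTE qt).
case: (eqVneq n p) => // np; case: (eqVneq n q) => [->|nq]; first by rewrite (negbTE qt).
by rewrite (three pq pt qt np nq) eqxx.
Qed.

Lemma mk_rot p q t x y w : p != q -> p != t -> q != t -> mk p q t x y w = mk q t p y w x.
Proof.
move=> pq pt qt; apply/ffunP => n; rewrite !ffunE.
have qp : (q == p) = false by rewrite eq_sym (negbTE pq).
have tp : (t == p) = false by rewrite eq_sym (negbTE pt).
have tq : (t == q) = false by rewrite eq_sym (negbTE qt).
case: (eqVneq n p) => [->|np]; first by rewrite ?eqxx (negbTE pq) (negbTE pt).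
case: (eqVneq n q) => [_|nq] //.
by rewrite (three pq pt qt np nq) ?tp ?tq ?eqxx.
Qed.

Lemma ordK2 (r : 'I_4) : (inord (r %/ 2) : 'I_2) = inord r./2.
Proof. by rewrite divn2. Qed.
Lemma ordK2' (r : 'I_4) : (inord (r %% 2) : 'I_2) = inord (odd r).
Proof. by rewrite modn2. Qed.

Lemma Phi_ijk psi i j k : Phi psi i j k = PhiOf (Bf psi i j k).
Proof. by apply/matrixP => r w; rewrite !mxE /Bf ordK2 ordK2' inord_val. Qed.

Lemma Phi_ikj psi i j k : i != j -> i != k -> j != k ->
  Phi psi i k j = PhiOf (fun x y z => Bf psi i j k x z y).
Proof.
move=> ij ik jk; apply/matrixP => r w; rewrite !mxE /Bf ordK2 ordK2' inord_val.
by rewrite mk_swap // eq_sym.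
Qed.

Lemma Phi_jki psi i j k : i != j -> i != k -> j != k ->
  Phi psi j k i = PhiOf (fun x y z => Bf psi i j k z x y).
Proof.
move=> ij ik jk; apply/matrixP => r w; rewrite !mxE /Bf ordK2 ordK2' inord_val.
by rewrite (@mk_rot i j k _ _ _ ij ik jk).
Qed.

Lemma sum_ffun3 i j k (F : {ffun 'I_3 -> 'I_2} -> C) : i != j -> i != k -> j != k ->
  \sum_f F f = \sum_(x < 2) \sum_(y < 2) \sum_(z < 2) F (mk i j k x y z).
Proof.
move=> ij ik jk.
rewrite (partition_big (fun f : {ffun 'I_3 -> 'I_2} => f i) predT) //=.
apply: eq_bigr => x _.
rewrite (partition_big (fun f : {ffun 'I_3 -> 'I_2} => f j) predT) //=.
apply: eq_bigr => y _.
rewrite (partition_big (fun f : {ffun 'I_3 -> 'I_2} => f k) predT) //=.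
apply: eq_bigr => z _.
rewrite (big_pred1 (mk i j k x y z)) // => f /=; by rewrite mk_eq // andbA.
Qed.

Lemma NG1 psi i j k : i != j -> i != k -> j != k -> normalized psi -> NG (Bf psi i j k) = 1.
Proof.
move=> ij ik jk; rewrite /normalized => <-.
rewrite (reindex basis_idx); last exact: onW_bij basis_bij.
rewrite (@sum_ffun3 i j k _ ij ik jk) /NG.
apply: eq_bigr => x _; apply: eq_bigr => y _; apply: eq_bigr => z _.
by rewrite normCK /Bf !inord_val.
Qed.

End G.


Lemma final_abs (C : numClosedFieldType) (S c1 c2 c3 F1 F2 F3 D D2 D3 : C) :
  S = 1 + 2 * F1 - F2 - F3 -> c1 ^+ 2 = F1 - 2 * D -> c2 ^+ 2 = F2 - 2 * D2 ->
  c3 ^+ 2 = F3 - 2 * D3 -> D2 = D -> D3 = D ->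
  (1 < S <-> (c2 ^+ 2 + c3 ^+ 2) / 2 < c1 ^+ 2).
Proof.
move=> -> -> -> -> -> ->.
have -> : 1 + 2 * F1 - F2 - F3 = 1 + (2 * F1 - F2 - F3) by ring.
rewrite ltrDl ltr_pdivrMr // -[in X in _ <-> X]subr_gt0.
have -> : (F1 - 2 * D) * 2 - (F2 - 2 * D + (F3 - 2 * D)) = 2 * F1 - F2 - F3 by ring.
by [].
Qed.

Theorem corollary2 (R : rcfType) (psi : 'cV[R[i]]_8) (i j k : 'I_3) :
  normalized psi -> i != j -> i != k -> j != k ->
  (1 < Sval (reduced psi i j) <->
   (concurrence (reduced psi i k) ^+ 2 + concurrence (reduced psi j k) ^+ 2) / 2
     < concurrence (reduced psi i j) ^+ 2).
Proof.
move=> hn ij ik jk.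
have ji : j != i by rewrite eq_sym.
have ki : k != i by rewrite eq_sym.
have kj : k != j by rewrite eq_sym.
pose G1 := @Bf _ psi i j k.
apply: (@final_abs _ _ _ _ _ (Fm (Mof (PhiOf G1))) (Fm (Mof (PhiOf (fun x y z => G1 x z y))))
   (Fm (Mof (PhiOf (fun x y z => G1 z x y)))) (`|\det (Mof (PhiOf G1))|)
   (`|\det (Mof (PhiOf (fun x y z => G1 x z y)))|) (`|\det (Mof (PhiOf (fun x y z => G1 z x y)))|)).
- by rewrite (@reducedE _ psi i j k ij ik jk) (@Phi_ijk _ psi i j k) SvalG (@NG1 _ psi i j k ij ik jk hn) expr1n.
- by rewrite (@reducedE _ psi i j k ij ik jk) (@concE _ (Phi psi i j k)) (@Phi_ijk _ psi i j k).
- by rewrite (@reducedE _ psi i k j ik ij kj) (@concE _ (Phi psi i k j)) (@Phi_ikj _ psi i j k ij ik jk).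
- by rewrite (@reducedE _ psi j k i jk ji ki) (@concE _ (Phi psi j k i)) (@Phi_jki _ psi i j k ij ik jk).
- by congr (`|_|); exact: det_perm1.
- by congr (`|_|); exact: det_perm2.
Qed.
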